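(* Let $k\in\{1,2,3,4\}$ and let $\hat Q=(\hat\pi,\hat g_{k-1},\hat g_k,\hat\mu_k,\hat{\mathscr B}_k,\hat{\mathscr C}_{\mathscr B_k})$ be any fixed functions with $\hat\pi,\hat g_{k-1},\hat g_k$ taking values in $(0,1)$ and $\hat g_0=\hat\pi$; for $k=1$ take $\hat{\mathscr C}_{\mathscr B_1}(X)=\hat{\mathscr B}_1(1,X)$. Define $h(\hat Q)(O)=\frac{1-R}{1-\hat\pi(X)}\frac{\hat g_k(\overline M_k,X)}{1-\hat g_k(\overline M_k,X)}\frac{1-\hat g_{k-1}(\overline M_{k-1},X)}{\hat g_{k-1}(\overline M_{k-1},X)}\{Y-\hat\mu_k(\overline M_k,0,X)\}+\frac{R}{1-\hat\pi(X)}\frac{1-\hat g_{k-1}(\overline M_{k-1},X)}{\hat g_{k-1}(\overline M_{k-1},X)}\{\hat\mu_k(\overline M_k,0,X)-\hat{\mathscr B}_k(\overline M_{k-1},1,X)\}+\frac{1-R}{1-\hat\pi(X)}\{\hat{\mathscr B}_k(\overline M_{k-1},1,X)-\hat{\mathscr C}_{\mathscr B_k}(X)\}+\hat{\mathscr C}_{\mathscr B_k}(X)$. Then $$\mathbb E_P[h(\hat Q)(O)]-\gamma_{R\to M_k\leadsto Y}=\mathbb E_P\Big[\frac{1}{1-\hat\pi}\frac{1}{1-\hat g_k}\frac{1-\hat g_{k-1}}{\hat g_{k-1}}(g_k-\hat g_k)(\hat\mu_k-\mu_k)+\frac{1}{1-\hat\pi}\frac{1}{\hat g_{k-1}}(\hat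 g_{k-1}-g_{k-1})(\hat{\mathscr B}_k-\mathscr B_k)+\frac{1}{1-\hat\pi}(\pi-\hat\pi)(\hat{\mathscr C}_{\mathscr B_k}-\mathscr C_{\mathscr B_k})\Big],$$ where $\pi,\hat\pi$ are evaluated at $X$, $g_k,\hat g_k$ at $(\overline M_k,X)$, $g_{k-1},\hat g_{k-1}$ at $(\overline M_{k-1},X)$, $\mu_k,\hat\mu_k$ at $(\overline M_k,0,X)$, $\mathscr B_k,\hat{\mathscr B}_k$ at $(\overline M_{k-1},1,X)$, and $\mathscr C_{\mathscr B_k},\hat{\mathscr C}_{\mathscr B_k}$ at $X$. For $k=1$ this equals $\mathbb E_P\big[\frac{1}{\hat\pi}\frac{1}{1-\hat g_1}(g_1-\hat g_1)(\hat\mu_1-\mu_1)+\frac{1}{\hat\pi}(\hat\pi-\pi)(\hat{\mathscr B}_1-\mathscr B_1)\big]$.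
   Context: Let $O=(X,R,M_1,M_2,M_3,M_4,Y)$ have distribution $P$, where $X$ is a covariate vector, $R\in\{0,1\}$, $M_1,\dots,M_4$ are mediators, and $Y$ is a real-valued square-integrable outcome. Write $\overline M_k=(M_1,\dots,M_k)$, $\overline M_0=\emptyset$. Assume positivity: $0<P(R=1\mid\overline M_j,X)<1$ a.s., $j=0,\dots,4$. Nuisances: $\pi(X)=P(R=1\mid X)$; $g_j(\overline M_j,X)=P(R=1\mid\overline M_j,X)$ with $g_0=\pi$; $\mu_k(\overline M_k,r,X)=\mathbb E[Y\mid\overline M_k,R=r,X]$; $\mathscr B_k(\overline M_{k-1},1,X)=\mathbb E[\mu_k(\overline M_k,0,X)\mid\overline M_{k-1},R=1,X]$; $\mathscr C_{\mathscr B_k}(X)=\mathbb E[\mathscr B_k(\overline M_{k-1},1,X)\mid R=0,X]$ for $k=2,3,4$ and $\mathscr C_{\mathscr B_1}(X)=\mathscr B_1(1,X)$. Target: $\gamma_{R\to M_k\leadsto Y}=\int y\,dP(y\mid\overline m_4,R=0,x)\,dP(m_k\mid\overline m_{k-1},R=1,x)\prod_{j\ne k}dP(m_j\mid\overline m_{j-1},R=0,x)\,dP(x)$. All expectations are over a single draw $O\sim P$ with $\hat Q$ held fixed. *)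

(* Defs.v *)
From Stdlib Require List.
From mathcomp Require Import all_boot all_order all_algebra all_classical all_reals all_analysis.
Set Implicit Arguments.
Unset Strict Implicit.
Unset Printing Implicit Defensive.
Import Order.TTheory GRing.Theory Num.Theory.
Local Open Scope classical_set_scope.
Local Open Scope ring_scope.

Section Setting.
Context {R : realType} {d : measure_display} {Omega : measurableType d}
  (P : probability Omega R).

Definition preim_sys {dT} {T : measurableType dT} (Z : Omega -> T)
  : set (set Omega) := [set Z @^-1` B | B in @measurable _ T].

Definition sigmaMX {dX d1 d2 d3 d4} {TX : measurableType dX}
  {T1 : measurableType d1} {T2 : measurableType d2}
  {T3 : measurableType d3} {T4 : measurableType d4}
  (X : Omega -> TX) (M1 : Omega -> T1) (M2 : Omega -> T2)
  (M3 : Omega -> T3) (M4 : Omega -> T4) (j : nat) : set (set Omega) :=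
  <<s preim_sys X
      `|` (if (1 <= j)%N then preim_sys M1 else set0)
      `|` (if (2 <= j)%N then preim_sys M2 else set0)
      `|` (if (3 <= j)%N then preim_sys M3 else set0)
      `|` (if (4 <= j)%N then preim_sys M4 else set0) >>.

Definition sub_meas (G : set (set Omega)) (f : Omega -> R) : Prop :=
  forall B : set R, measurable B -> G (f @^-1` B).

Definition ind (b : bool) : R := (b : nat)%:R.

Definition intg (f : Omega -> R) : Prop := P.-integrable setT (EFin \o f).

Definition is_condexp (G : set (set Omega)) (f h : Omega -> R) : Prop :=
  [/\ sub_meas G h, intg f, intg h &
      forall A, G A ->
        (\int[P]_(w in A) (f w)%:E = \int[P]_(w in A) (h w)%:E)%E].

(* h (a G-measurable r.v., i.e. a function of the G-generating variables)
   is (a version of) E[f | G, Rv = r] : conditional expectation within the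
   arm {Rv = r}. *)
Definition is_condexp_arm (Rv : Omega -> bool) (r : bool)
  (G : set (set Omega)) (f h : Omega -> R) : Prop :=
  [/\ sub_meas G h,
      P.-integrable [set w | Rv w = r] (EFin \o f),
      P.-integrable [set w | Rv w = r] (EFin \o h) &
      forall A, G A ->
        (\int[P]_(w in A `&` [set w | Rv w = r]) (f w)%:E
         = \int[P]_(w in A `&` [set w | Rv w = r]) (h w)%:E)%E].

Definition hQ (Rv : Omega -> bool) (Y pih gkm1h gkh muh Bh Ch : Omega -> R)
  (w : Omega) : R :=
  (1 - ind (Rv w)) / (1 - pih w) * (gkh w / (1 - gkh w))
     * ((1 - gkm1h w) / gkm1h w) * (Y w - muh w)
  + ind (Rv w) / (1 - pih w) * ((1 - gkm1h w) / gkm1h w) * (muh w - Bh w)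
  + (1 - ind (Rv w)) / (1 - pih w) * (Bh w - Ch w)
  + Ch w.

Definition remainder (pi pih gkm1 gkm1h gk gkh mu muh B Bh C Ch : Omega -> R)
  (w : Omega) : R :=
  1 / (1 - pih w) * (1 / (1 - gkh w)) * ((1 - gkm1h w) / gkm1h w)
     * (gk w - gkh w) * (muh w - mu w)
  + 1 / (1 - pih w) * (1 / gkm1h w) * (gkm1h w - gkm1 w) * (Bh w - B w)
  + 1 / (1 - pih w) * (pi w - pih w) * (Ch w - C w).

Definition remainder1 (pi pih g1 g1h mu muh B Bh : Omega -> R)
  (w : Omega) : R :=
  1 / pih w * (1 / (1 - g1h w)) * (g1 w - g1h w) * (muh w - mu w)
  + 1 / pih w * (pih w - pi w) * (Bh w - B w).

(* Integrability of the finitely many random variables appearing when the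
   expectations in the statement are expanded (the paper tacitly assumes
   all these expectations exist). *)
Definition integrability_conditions (Rv : Omega -> bool)
  (Y pi pih gkm1 gkm1h gk gkh mu muh B Bh C Ch : Omega -> R) : Prop :=
  let r1 w := ind (Rv w) in
  let r0 w := 1 - ind (Rv w) in
  let a w := 1 / (1 - pih w) in
  let b w := gkh w / (1 - gkh w) in
  let c w := (1 - gkm1h w) / gkm1h w in
  List.Forall intg
   [:: (fun w => r0 w * a w * b w * c w * Y w);
       (fun w => r0 w * a w * b w * c w * mu w);
       (fun w => r0 w * a w * b w * c w * muh w);
       (fun w => (1 - gk w) * a w * b w * c w * mu w);
       (fun w => (1 - gk w) * a w * b w * c w * muh w);
       (fun w => r1 w * a w * c w * mu w);
       (fun w => r1 w * a w * c w * muh w);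
       (fun w => r1 w * a w * c w * B w);
       (fun w => r1 w * a w * c w * Bh w);
       (fun w => gk w * a w * c w * mu w);
       (fun w => gk w * a w * c w * muh w);
       (fun w => gkm1 w * a w * c w * B w);
       (fun w => gkm1 w * a w * c w * Bh w);
       (fun w => r0 w * a w * B w);
       (fun w => r0 w * a w * Bh w);
       (fun w => r0 w * a w * C w);
       (fun w => r0 w * a w * Ch w);
       (fun w => (1 - gkm1 w) * a w * B w);
       (fun w => (1 - gkm1 w) * a w * Bh w);
       (fun w => (1 - pi w) * a w * C w);
       (fun w => (1 - pi w) * a w * Ch w);
       C; Ch].

End Setting.

(* Main.v *)
Require Import Defs.
From mathcomp Require Import all_boot all_order all_algebra all_classical all_reals all_analysis.
From mathcomp Require Import measurable_realfun ring lra zify.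
Import Order.TTheory GRing.Theory Num.Theory.
Import HBNNSimple.
Local Open Scope classical_set_scope.
Local Open Scope ring_scope.


Section Gen.
Context {R : realType} {d : measure_display} {Omega : measurableType d}
  (P : probability Omega R).
Implicit Types (f g u v : Omega -> R).

Lemma intg_meas f : intg P f -> measurable_fun setT f.
Proof. by case/integrableP => /measurable_EFinP. Qed.

Lemma intg_ext f g : intg P f -> (forall w, f w = g w) -> intg P g.
Proof. by move=> ? fg; have -> : g = f by apply/funext=> w; rewrite fg. Qed.
Arguments intg_ext {f g}.

Lemma sub_meas_meas (G : set (set Omega)) f :
  (forall A, G A -> measurable A) -> sub_meas G f -> measurable_fun setT f.
Proof. by move=> GM sf _ B mB; rewrite setTI; apply/GM/sf. Qed.

Lemma sub_meas_comp (G : set (set Omega)) f (phi : R -> R) :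
  measurable_fun setT phi -> sub_meas G f -> sub_meas G (phi \o f).
Proof.
move=> mphi sf B mB.
have -> : (phi \o f) @^-1` B = f @^-1` (phi @^-1` B) by [].
by apply: sf; have := mphi measurableT B mB; rewrite setTI.
Qed.

Lemma intg_le f g : measurable_fun setT f -> (forall w, `|f w| <= `|g w|) ->
  intg P g -> intg P f.
Proof.
move=> mf fg ig; apply: le_integrable ig => //.
  exact/measurable_EFinP.
by move=> w _ /=; rewrite lee_fin.
Qed.

Lemma intgD f g : intg P f -> intg P g -> intg P (fun w => f w + g w).
Proof.
move=> ifg ig; have := integrableD measurableT ifg ig.
by apply: eq_integrable => // w _.
Qed.

Arguments intgD {f g}.
Lemma intgZ (c : R) f : intg P f -> intg P (fun w => c * f w).
Proof.
move=> iff; have := integrableZl measurableT c iff.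
by apply: eq_integrable => // w _.
Qed.

Arguments intgZ c {f}.
Lemma intD f g : intg P f -> intg P g ->
  (\int[P]_w (f w + g w)%:E = \int[P]_w (f w)%:E + \int[P]_w (g w)%:E)%E.
Proof. by move=> iff ig; rewrite -integralD_EFin. Qed.

Lemma intB f g : intg P f -> intg P g ->
  (\int[P]_w (f w - g w)%:E = \int[P]_w (f w)%:E - \int[P]_w (g w)%:E)%E.
Proof. by move=> iff ig; rewrite -integralB_EFin. Qed.

Lemma intZ (c : R) f : intg P f ->
  (\int[P]_w (c * f w)%:E = c%:E * \int[P]_w (f w)%:E)%E.
Proof. by move=> iff; rewrite -integralZl. Qed.

Lemma intg_indicM (A : set Omega) u : measurable A -> intg P u ->
  intg P (fun w => \1_A w * u w).
Proof.
move=> mA iu; apply: (intg_le _ u) => //.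
  by apply: measurable_funM; [exact: measurable_indic | exact: intg_meas].
move=> w; rewrite normrM indicE; case: (w \in A) => /=.
  by rewrite normr1 mul1r.
by rewrite normr0 mul0r.
Qed.

Lemma int_indic (A : set Omega) u : measurable A ->
  (\int[P]_(w in A) (u w)%:E = \int[P]_w (\1_A w * u w)%:E)%E.
Proof.
move=> mA; rewrite -[A in LHS]setTI integral_mkcondr.
apply: eq_integral => w _; rewrite /patch indicE.
by case: (w \in A); rewrite /= ?mul1r ?mul0r.
Qed.

Lemma gen_ge0 (G : set (set Omega)) (GM : forall A, G A -> measurable A)
  (f u v : Omega -> R) :
  (forall w, 0 <= f w) -> sub_meas G f -> intg P u -> intg P v ->
  intg P (fun w => f w * u w) -> intg P (fun w => f w * v w) ->
  (forall A, G A -> \int[P]_(w in A) (u w)%:E = \int[P]_(w in A) (v w)%:E)%E ->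
  (\int[P]_w (f w * u w)%:E = \int[P]_w (f w * v w)%:E)%E.
Proof.
move=> f0 sf iu iv ifu ifv Guv.
have mf := sub_meas_meas G f GM sf.
have mF : measurable_fun setT (EFin \o f) by apply/measurable_EFinP.
pose s := nnsfun_approx measurableT mF.
have sE n : (s n : Omega -> R) = approx setT (EFin \o f) n := nnsfun_approxE _ _ n.
have GA n k : G (dyadic_approx setT (EFin \o f) n k).
  rewrite /dyadic_approx; case: ifPn => _; last first.
    by rewrite -(preimage_set0 f); apply: sf; exact: measurable0.
  have -> : setT `&` [set x | (EFin \o f) x \in EFin @` [set` dyadic_itv R n k]]
      = f @^-1` [set` dyadic_itv R n k].
    apply/seteqP; split=> x /=.
      by case=> _; rewrite inE => -[y yI [<-]].
    by move=> fx; split=> //; apply/mem_set; exists (f x).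
  by apply: sf; exact: measurable_itv.
have GB n : G (integer_approx setT (EFin \o f) n).
  have -> : integer_approx setT (EFin \o f) n = f @^-1` `[n%:R, +oo[.
    apply/seteqP; split=> x /=; rewrite /integer_approx /= in_itv /= andbT lee_fin.
      by case.
    by split.
  by apply: sf; exact: measurable_itv.
pose Phi (h : Omega -> R) := [/\ intg P (fun w => h w * u w),
   intg P (fun w => h w * v w) &
   (\int[P]_w (h w * u w)%:E = \int[P]_w (h w * v w)%:E)%E].
have Phi_ind A : G A -> Phi (\1_A).
  move=> GA0; have mA := GM _ GA0.
  split; [exact: intg_indicM | exact: intg_indicM |].
  by rewrite -!int_indic //; exact: Guv GA0.
have PhiZ c h : Phi h -> Phi (fun w => c * h w).
  case=> i1 i2 e; split.
  - by apply: (intg_ext (intgZ c i1)) => w; rewrite mulrA.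
  - by apply: (intg_ext (intgZ c i2)) => w; rewrite mulrA.
  - have Ez z : intg P (fun w => h w * z w) ->
      (\int[P]_w (c * h w * z w)%:E = c%:E * \int[P]_w (h w * z w)%:E)%E.
      by move=> iz; rewrite -intZ //; apply: eq_integral => w _; rewrite mulrA.
    by rewrite /= !Ez // e.
have PhiD h1 h2 : Phi h1 -> Phi h2 -> Phi (fun w => h1 w + h2 w).
  case=> i1 i2 e; case=> j1 j2 e'; split.
  - by apply: (intg_ext (intgD i1 j1)) => w; rewrite mulrDl.
  - by apply: (intg_ext (intgD i2 j2)) => w; rewrite mulrDl.
  - have Ez z : intg P (fun w => h1 w * z w) -> intg P (fun w => h2 w * z w) ->
      (\int[P]_w ((h1 w + h2 w) * z w)%:E = \int[P]_w (h1 w * z w)%:E + \int[P]_w (h2 w * z w)%:E)%E.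
      by move=> iz iz'; rewrite -intD //; apply: eq_integral => w _; rewrite mulrDl.
    by rewrite /= !Ez // e e'.
have Phi0 : Phi (fun _ => 0).
  split.
  - by apply: (intg_ext (intgZ 0 iu)) => w; rewrite !mul0r.
  - by apply: (intg_ext (intgZ 0 iu)) => w; rewrite !mul0r.
  - by apply: eq_integral => w _; rewrite !mul0r.
have PhiS (I : Type) (sq : seq I) (F : I -> Omega -> R) :
    (forall i, Phi (F i)) -> Phi (fun w => \sum_(i <- sq) F i w).
  move=> HF; elim: sq => [|i sq IH].
    have -> : (fun w => \sum_(i <- [::]) F i w) = (fun _ => 0).
      by apply/funext => w; rewrite big_nil.
    exact: Phi0.
  have -> : (fun w => \sum_(j <- i :: sq) F j w) =
    (fun w => F i w + \sum_(j <- sq) F j w).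
    by apply/funext => w; rewrite big_cons.
  exact: PhiD (HF i) IH.
have lin n : Phi (s n).
  rewrite sE /approx.
  apply: PhiD; last exact/PhiZ/Phi_ind.
  by apply: PhiS => k; apply/PhiZ/Phi_ind.
have cvgI (z : Omega -> R) : intg P z -> intg P (fun w => f w * z w) ->
    ([sequence \int[P]_w (s n w * z w)%:E]_n @ \oo -->
     \int[P]_w (f w * z w)%:E)%E.
  move=> iz ifz.
  have [] := @dominated_convergence _ _ _ P setT measurableT
    (fun n w => (s n w * z w)%:E) (fun w => (f w * z w)%:E)
    (fun w => `|(f w * z w)%:E|)%E.
  - move=> n; apply/measurable_EFinP/measurable_funM => //.
    exact: intg_meas.
  - exact/measurable_EFinP/intg_meas.
  - apply: aeW => x _; apply: cvg_EFin; first by apply: nearW.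
    apply: cvgMr_tmp.
    have -> : (fun n => s n x) = approx setT (EFin \o f) ^~ x.
      by apply/funext => n; rewrite sE.
    exact: (@cvg_approx _ _ _ setT (EFin \o f) x (fun x _ => f0 x) I (ltry _)).
  - exact: integrable_abse.
  - apply: aeW => x n _ /=; rewrite lee_fin !normrM ler_wpM2r //.
    rewrite (ger0_norm (f0 x)) ger0_norm; last exact: fun_ge0.
    by rewrite sE; have := @le_approx _ _ _ setT (EFin \o f) n x (fun x _ => f0 x) I; rewrite lee_fin.
  - by [].
have E : (fun n => \int[P]_w (s n w * u w)%:E)%E = (fun n => \int[P]_w (s n w * v w)%:E)%E.
  by apply/funext => n; case: (lin n).
have h1 := cvgI u iu ifu; have h2 := cvgI v iv ifv.
rewrite /= E in h1.
exact: (cvg_unique (@ereal_hausdorff R) h1 h2).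
Qed.


Lemma absrpos f w : `|f^\+ w| <= `|f w|.
Proof. by rewrite ger0_norm ?funrpos_ge0 // /funrpos ge_max ler_norm normr_ge0. Qed.

Lemma absrneg f w : `|f^\- w| <= `|f w|.
Proof.
by rewrite ger0_norm ?funrneg_ge0 // /funrneg ge_max normr_ge0 andbT -normrN ler_norm.
Qed.

Lemma funrposnegE f w : f w = f^\+ w - f^\- w.
Proof.
rewrite /funrpos /funrneg; have [h|h] := leP 0 (f w).
  by rewrite (max_idPr _) ?subr0 // oppr_le0.
by rewrite (max_idPl _) ?sub0r ?opprK // oppr_ge0 ltW.
Qed.

Lemma gen (G : set (set Omega)) (GM : forall A, G A -> measurable A) f u v :
  sub_meas G f -> intg P u -> intg P v ->
  intg P (fun w => f w * u w) -> intg P (fun w => f w * v w) ->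
  (forall A, G A -> \int[P]_(w in A) (u w)%:E = \int[P]_(w in A) (v w)%:E)%E ->
  (\int[P]_w (f w * u w)%:E = \int[P]_w (f w * v w)%:E)%E.
Proof.
move=> sf iu iv ifu ifv Guv.
have mp : measurable_fun [set: R] (fun x : R => Num.max x 0) :=
  measurable_funrpos (measurable_id (D:=setT)).
have mn : measurable_fun [set: R] (fun x : R => Num.max (- x) 0) :=
  measurable_funrneg (measurable_id (D:=setT)).
have sp : sub_meas G f^\+ := sub_meas_comp G f _ mp sf.
have sn : sub_meas G f^\- := sub_meas_comp G f _ mn sf.
have mfp := sub_meas_meas G _ GM sp.
have mfn := sub_meas_meas G _ GM sn.
have ip z : intg P z -> intg P (fun w => f w * z w) -> intg P (fun w => f^\+ w * z w).
  move=> iz ifz; apply: (intg_le _ _ _ _ ifz).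
    by apply: measurable_funM => //; exact: intg_meas.
  by move=> w; rewrite !normrM ler_wpM2r // absrpos.
have in_ z : intg P z -> intg P (fun w => f w * z w) -> intg P (fun w => f^\- w * z w).
  move=> iz ifz; apply: (intg_le _ _ _ _ ifz).
    by apply: measurable_funM => //; exact: intg_meas.
  by move=> w; rewrite !normrM ler_wpM2r // absrneg.
have E z : intg P z -> intg P (fun w => f w * z w) ->
    (\int[P]_w (f w * z w)%:E = \int[P]_w (f^\+ w * z w)%:E - \int[P]_w (f^\- w * z w)%:E)%E.
  move=> iz ifz; rewrite -intB; [|exact: ip|exact: in_].
  by apply: eq_integral => w _; rewrite -mulrBl -funrposnegE.
rewrite E // [RHS]E //.
rewrite (gen_ge0 G GM _ _ _ (fun w => funrpos_ge0 f w) sp iu iv (ip _ iu ifu) (ip _ iv ifv) Guv).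
by rewrite (gen_ge0 G GM _ _ _ (fun w => funrneg_ge0 f w) sn iu iv (in_ _ iu ifu) (in_ _ iv ifv) Guv).
Qed.

End Gen.
Arguments intg_ext {R d Omega P f g}.
Arguments intgD {R d Omega P f g}.
Arguments intgZ {R d Omega P} c {f}.
Arguments intg_le {R d Omega P} f g.
Arguments intD {R d Omega P} f g.
Arguments intB {R d Omega P} f g.
Arguments intZ {R d Omega P} c f.
Arguments intg_meas {R d Omega P f}.
Arguments intg_indicM {R d Omega P} A u.
Arguments int_indic {R d Omega} P A u.
Arguments gen {R d Omega P} G GM f u v.


Lemma measurable_inv (R : realType) : measurable_fun [set: R] (fun x : R => x^-1).
Proof.
have -> : [set: R] = ~` [set 0] `|` [set 0] by rewrite setUC setUv.
apply/measurable_funU => //; first by apply: measurableC.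
split.
  apply: open_continuous_measurable_fun.
    apply: closed_openC; apply: accessible_closed_set1.
    exact/hausdorff_accessible/Rhausdorff.
  by move=> x; rewrite inE /= => /eqP x0; exact: inv_continuous.
move=> _ B mB; have [B0|B0] := pselect (B (0 : R)^-1).
  have -> : [set 0] `&` (fun x : R => x^-1) @^-1` B = [set 0].
    by apply/seteqP; split => [x []//|x /= ->]; split.
  by [].
have -> : [set 0] `&` (fun x : R => x^-1) @^-1` B = set0.
  by apply/seteqP; split => [x [/= -> ]//|x].
by [].
Qed.

Section Sub.
Context {R : realType} {d : measure_display} {Omega : measurableType d}.
Implicit Types (f g h : Omega -> R) (S : set (set Omega)).

Lemma sub_measP S h :
  sub_meas (<<s S >>) h <-> measurable_fun [set: g_sigma_algebraType S] h.
Proof.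
split => [sh _ B mB|mh B mB]; first by rewrite setTI; exact: sh.
by have := mh measurableT B mB; rewrite setTI.
Qed.

Lemma sub_measM S f g : sub_meas (<<s S >>) f -> sub_meas (<<s S >>) g ->
  sub_meas (<<s S >>) (fun w => f w * g w).
Proof. by move=> /sub_measP mf /sub_measP mg; apply/sub_measP; exact: measurable_funM. Qed.

Lemma sub_measD S f g : sub_meas (<<s S >>) f -> sub_meas (<<s S >>) g ->
  sub_meas (<<s S >>) (fun w => f w + g w).
Proof. by move=> /sub_measP mf /sub_measP mg; apply/sub_measP; exact: measurable_funD. Qed.

Lemma sub_measB S f g : sub_meas (<<s S >>) f -> sub_meas (<<s S >>) g ->
  sub_meas (<<s S >>) (fun w => f w - g w).
Proof. by move=> /sub_measP mf /sub_measP mg; apply/sub_measP; exact: measurable_funB. Qed.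

Lemma sub_meas_cst S (c : R) : sub_meas (<<s S >>) (fun _ : Omega => c).
Proof. by apply/sub_measP; exact: measurable_cst. Qed.

Lemma sub_measV S f : sub_meas (<<s S >>) f -> sub_meas (<<s S >>) (fun w => (f w)^-1).
Proof.
move=> /sub_measP mf; apply/sub_measP.
exact: (measurableT_comp (measurable_inv R) mf).
Qed.

Lemma sub_meas_lt S f g : sub_meas (<<s S >>) f -> sub_meas (<<s S >>) g ->
  <<s S >> [set w | f w < g w].
Proof.
move=> /sub_measP mf /sub_measP mg.
have := measurable_fun_ltr mf mg measurableT (Y := [set true]) I.
rewrite setTI => h.
have -> : [set w | f w < g w] = (fun x => f x < g x) @^-1` [set true].
  by apply/seteqP; split => x /=.
exact: h.
Qed.

End Sub.


Section Arm.
Context {R : realType} {d : measure_display} {Omega : measurableType d}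
  (P : probability Omega R).
Implicit Types (f g h u v y : Omega -> R) (S : set (set Omega)).

Definition rind (Rv : Omega -> bool) (r : bool) (w : Omega) : R :=
  if r then ind (Rv w) else 1 - ind (Rv w).

Lemma rind_indic Rv r w : rind Rv r w = \1_[set w | Rv w = r] w.
Proof.
rewrite /rind indicE /ind; case: r; case E: (Rv w) => /=;
  [rewrite mem_set|rewrite memNset|rewrite memNset|rewrite mem_set] => //=;
  rewrite ?subrr ?subr0 //; by rewrite E.
Qed.

Lemma marm (Rv : Omega -> bool) r : measurable_fun setT Rv ->
  measurable [set w | Rv w = r].
Proof. by move=> mRv; have := mRv measurableT [set r] I; rewrite setTI. Qed.

Lemma mrind Rv r : measurable_fun setT Rv -> measurable_fun setT (rind Rv r).
Proof.
move=> mRv; have -> : rind Rv r = \1_[set w | Rv w = r].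
  by apply/funext => w; rewrite rind_indic.
exact/measurable_indic/marm.
Qed.

Lemma int_arm Rv r A y : measurable_fun setT Rv ->
  (\int[P]_(w in A `&` [set w | Rv w = r]) (y w)%:E =
   \int[P]_(w in A) (rind Rv r w * y w)%:E)%E.
Proof.
move=> mRv; rewrite integral_mkcondr; apply: eq_integral => w _.
rewrite rind_indic /patch indicE.
by case: (w \in _); rewrite /= ?mul1r ?mul0r.
Qed.

Lemma intg_arm Rv r y : measurable_fun setT Rv ->
  P.-integrable [set w | Rv w = r] (EFin \o y) ->
  intg P (fun w => rind Rv r w * y w).
Proof.
move=> mRv /(integrable_mkcond _ (marm _ r mRv)).
apply: eq_integrable => // w _ /=.
rewrite rind_indic /patch indicE.
by case: (w \in _); rewrite /= ?mul1r ?mul0r.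
Qed.

Lemma intg_rind Rv r : measurable_fun setT Rv -> intg P (rind Rv r).
Proof.
move=> mRv; apply: (intg_le _ (fun _ => 1)); first exact: mrind.
  move=> w; rewrite rind_indic indicE normr1.
  by case: (w \in _); rewrite ?normr1 ?normr0.
exact: finite_measure_integrable_cst.
Qed.

Lemma condexp_arm_gen Rv r G y h : measurable_fun setT Rv ->
  (forall A, G A -> measurable A) ->
  is_condexp_arm P Rv r G y h ->
  [/\ intg P (fun w => rind Rv r w * y w), intg P (fun w => rind Rv r w * h w) &
  forall A, G A -> (\int[P]_(w in A) (rind Rv r w * y w)%:E =
                    \int[P]_(w in A) (rind Rv r w * h w)%:E)%E].
Proof.
move=> mRv GM [_ iy ih e]; split; [exact: intg_arm|exact: intg_arm|].
by move=> A GA; rewrite -!int_arm // e.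
Qed.

Definition gr (g : Omega -> R) (r : bool) w : R := if r then g w else 1 - g w.

Lemma condexp_gen Rv r G g : measurable_fun setT Rv ->
  (forall A, G A -> measurable A) ->
  is_condexp P G (fun w => ind (Rv w)) g ->
  [/\ intg P (rind Rv r), intg P (gr g r) &
  forall A, G A -> (\int[P]_(w in A) (rind Rv r w)%:E =
                    \int[P]_(w in A) (gr g r w)%:E)%E].
Proof.
move=> mRv GM [_ ii ig e]; split; [exact: intg_rind| |].
  case: r; rewrite /gr //.
  apply: (intg_ext (intgD (finite_measure_integrable_cst P 1 measurableT)
     (intgZ (-1) ig))) => w /=.
  by rewrite mulN1r.
move=> A GA; have mA := GM _ GA; case: r; rewrite /rind /gr; first exact: e.
have i1 : P.-integrable A (EFin \o (fun _ : Omega => (1 : R))).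
  exact: finite_measure_integrable_cst.
rewrite !(integralB_EFin mA) //; first by rewrite e.
- exact: integrableS ig.
- exact: integrableS ii.
Qed.

End Arm.
Arguments marm {d Omega Rv} r.
Arguments condexp_gen {R d Omega P Rv} r {G g}.
Arguments condexp_arm_gen {R d Omega P Rv r G y h}.
Arguments int_arm {R d Omega P Rv r A y}.
Arguments intg_arm {R d Omega P Rv r y}.
Arguments intg_rind {R d Omega P Rv} r.
Arguments mrind {R d Omega Rv} r.


Section Uniq.
Context {R : realType} {d : measure_display} {Omega : measurableType d}
  (P : probability Omega R).
Implicit Types (f g h u v y : Omega -> R) (S : set (set Omega)).

Lemma pos_int0 (E : set Omega) (q : Omega -> R) : measurable E -> measurable_fun setT q ->
  {ae P, forall w, 0 < q w} ->
  (\int[P]_(w in E) (q w)%:E = 0)%E -> P E = 0.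
Proof.
move=> mE mq [N [mN N0 HN]] e.
have mqE : measurable_fun E (EFin \o q).
  exact/measurable_EFinP/(measurable_funS measurableT).
have e' : (\int[P]_(w in E) `|(q w)%:E| = 0)%E.
  rewrite -e; apply: ae_eq_integral => //.
  - by apply: measurableT_comp => //.
  - exists N; split => // w /= H; apply: HN => /= qw; apply: H => _.
    by rewrite /= gtr0_norm.
have [N' [mN' N'0 HN']] := (ae_eq_integral_abs P mE mqE).1 e'.
apply: (@subset_measure0 _ _ _ P _ _ mE (measurableU _ _ mN mN')); last exact: null_set_setU.
move=> w Ew; change (N w \/ N' w); have [qw|qw] := boolP (0 < q w).
  by right; apply: HN' => /= /(_ Ew) [] /eqP; rewrite (gt_eqF qw).
by left; apply: HN => /=; apply/negP.
Qed.

Lemma uniq_half S (GM : forall A, <<s S >> A -> measurable A) Rv r g h1 h2 :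
  measurable_fun setT Rv ->
  is_condexp P (<<s S >>) (fun w => ind (Rv w)) g ->
  {ae P, forall w, 0 < g w < 1} ->
  sub_meas (<<s S >>) h1 -> sub_meas (<<s S >>) h2 ->
  P.-integrable [set w | Rv w = r] (EFin \o h1) ->
  P.-integrable [set w | Rv w = r] (EFin \o h2) ->
  (forall A, <<s S >> A ->
    \int[P]_(w in A `&` [set w | Rv w = r]) (h1 w)%:E =
    \int[P]_(w in A `&` [set w | Rv w = r]) (h2 w)%:E)%E ->
  P [set w | h2 w < h1 w] = 0.
Proof.
move=> mRv cg gpos sh1 sh2 i1 i2 e.
set E := [set w | h2 w < h1 w].
have GE : <<s S >> E by exact: sub_meas_lt.
have mE := GM _ GE.
have marmr := marm r mRv.
set D := E `&` [set w | Rv w = r].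
have mD : measurable D by exact: measurableI.
have iD1 : P.-integrable D (EFin \o h1) by apply: (integrableS marmr mD _ i1); exact: subIsetr.
have iD2 : P.-integrable D (EFin \o h2) by apply: (integrableS marmr mD _ i2); exact: subIsetr.
have mh1 := sub_meas_meas _ _ GM sh1.
have mh2 := sub_meas_meas _ _ GM sh2.
have e0 : (\int[P]_(w in D) `|((h1 w - h2 w)%:E)| = 0)%E.
  transitivity (\int[P]_(w in D) ((h1 w)%:E - (h2 w)%:E))%E.
    apply: eq_integral => w; rewrite inE => -[Ew _].
    by rewrite /= gtr0_norm // subr_gt0.
  rewrite integralB_EFin // e // subee //.
  exact: integrable_fin_num.
have mdiff : measurable_fun D (fun w => (h1 w - h2 w)%:E).
  apply/measurable_EFinP/(measurable_funS measurableT) => //.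
  exact: measurable_funB.
have [N [mN N0 HN]] := (ae_eq_integral_abs P mD mdiff).1 e0.
have PD0 : P D = 0.
  apply: (@subset_measure0 _ _ _ P _ _ mD mN _ N0) => w Dw; apply: HN => /= /(_ Dw) [].
  by move/eqP; rewrite subr_eq0; case: Dw => /= /lt_eqF; rewrite eq_sym => ->.
have [_ _ ecg] := condexp_gen r mRv GM cg.
have : (\int[P]_(w in E) (gr g r w)%:E = 0)%E.
  rewrite -ecg // (eq_integral (fun w => (\1_[set w | Rv w = r] w)%:E)).
    by rewrite integral_indic // setIC.
  by move=> w _; rewrite rind_indic.
apply: pos_int0 => //.
  rewrite /gr; case: r {i1 i2 e marmr D mD iD1 iD2 e0 mdiff N mN N0 HN PD0 ecg}.
    by apply: (sub_meas_meas _ _ GM); case: cg.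
  by apply: measurable_funB => //; apply: (sub_meas_meas _ _ GM); case: cg.
apply: filterS gpos => w /andP[g0 g1]; rewrite /gr; case: r {i1 i2 e marmr D mD iD1 iD2 e0 mdiff N mN N0 HN PD0 ecg} => //.
by rewrite subr_gt0.
Qed.


Lemma uniq_arm S (GM : forall A, <<s S >> A -> measurable A) Rv r g h1 h2 :
  measurable_fun setT Rv ->
  is_condexp P (<<s S >>) (fun w => ind (Rv w)) g ->
  {ae P, forall w, 0 < g w < 1} ->
  sub_meas (<<s S >>) h1 -> sub_meas (<<s S >>) h2 ->
  P.-integrable [set w | Rv w = r] (EFin \o h1) ->
  P.-integrable [set w | Rv w = r] (EFin \o h2) ->
  (forall A, <<s S >> A ->
    \int[P]_(w in A `&` [set w | Rv w = r]) (h1 w)%:E =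
    \int[P]_(w in A `&` [set w | Rv w = r]) (h2 w)%:E)%E ->
  {ae P, forall w, h1 w = h2 w}.
Proof.
move=> mRv cg gpos sh1 sh2 i1 i2 e.
have E1 := uniq_half _ GM _ _ _ _ _ mRv cg gpos sh1 sh2 i1 i2 e.
have E2 : P [set w | h1 w < h2 w] = 0.
  by apply: (uniq_half _ GM _ _ _ _ _ mRv cg gpos sh2 sh1 i2 i1) => A GA; rewrite e.
have m1 := GM _ (sub_meas_lt _ _ _ sh2 sh1).
have m2 := GM _ (sub_meas_lt _ _ _ sh1 sh2).
exists ([set w | h2 w < h1 w] `|` [set w | h1 w < h2 w]); split.
- exact: measurableU.
- exact: null_set_setU.
- move=> w /= hw; have [h|h|h] := ltgtP (h1 w) (h2 w).
  + by right.
  + by left.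
  + by exfalso; apply: hw.
Qed.

End Uniq.


Section Sig.
Context {d : measure_display} {Omega : measurableType d}
  {dX d1 d2 d3 d4 : measure_display} {TX : measurableType dX}
  {T1 : measurableType d1} {T2 : measurableType d2}
  {T3 : measurableType d3} {T4 : measurableType d4}
  (X : Omega -> TX) (M1 : Omega -> T1) (M2 : Omega -> T2)
  (M3 : Omega -> T3) (M4 : Omega -> T4).

Lemma preim_meas {dT} {T : measurableType dT} (Z : Omega -> T) :
  measurable_fun setT Z -> preim_sys Z `<=` measurable.
Proof. by move=> mZ _ [B mB <-]; have := mZ measurableT B mB; rewrite setTI. Qed.

Lemma sig_meas j : measurable_fun setT X -> measurable_fun setT M1 ->
  measurable_fun setT M2 -> measurable_fun setT M3 -> measurable_fun setT M4 ->
  forall A, sigmaMX X M1 M2 M3 M4 j A -> measurable A.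
Proof.
move=> mX m1 m2 m3 m4; apply: smallest_sub; first exact: sigma_algebra_measurable.
move=> A [[[[HX|H1]|H2]|H3]|H4].
- exact: preim_meas _ mX _ HX.
- by move: H1; case: ifP => _ // /(preim_meas _ m1).
- by move: H2; case: ifP => _ // /(preim_meas _ m2).
- by move: H3; case: ifP => _ // /(preim_meas _ m3).
- by move: H4; case: ifP => _ // /(preim_meas _ m4).
Qed.

Lemma sig_mono i j : (i <= j)%N ->
  forall A, sigmaMX X M1 M2 M3 M4 i A -> sigmaMX X M1 M2 M3 M4 j A.
Proof.
move=> ij; apply: sub_sigma_algebra2.
move=> A [[[[HX|H1]|H2]|H3]|H4].
- by do 4 left.
- move: H1; case: ifP => // h H1; do 3 left; right.
  by rewrite (leq_trans h ij).
- move: H2; case: ifP => // h H2; do 2 left; right.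
  by rewrite (leq_trans h ij).
- move: H3; case: ifP => // h H3; left; right.
  by rewrite (leq_trans h ij).
- move: H4; case: ifP => // h H4; right.
  by rewrite (leq_trans h ij).
Qed.

End Sig.

Lemma sub_meas_mono {R : realType} {d} {Omega : measurableType d}
  (G G' : set (set Omega)) (f : Omega -> R) :
  (forall A, G A -> G' A) -> sub_meas G f -> sub_meas G' f.
Proof. by move=> GG sf B mB; apply/GG/sf. Qed.

Section J.
Context {R : realType} {d : measure_display} {Omega : measurableType d}
  (P : probability Omega R).
Implicit Types (f g h u v p q : Omega -> R).

Definition J f := fine (\int[P]_w (f w)%:E)%E.

Lemma Jint f : intg P f -> (\int[P]_w (f w)%:E = (J f)%:E)%E.
Proof. by move=> i; rewrite /J fineK //; exact: integrable_fin_num. Qed.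

Lemma Jext f g : (forall w, f w = g w) -> J f = J g.
Proof. by move=> fg; congr J; apply/funext. Qed.

Lemma JD f g : intg P f -> intg P g -> J (fun w => f w + g w) = J f + J g.
Proof. by move=> i1 i2; rewrite /J intD // -fineD //; exact: integrable_fin_num. Qed.

Lemma JB f g : intg P f -> intg P g -> J (fun w => f w - g w) = J f - J g.
Proof. by move=> i1 i2; rewrite /J intB // -fineB //; exact: integrable_fin_num. Qed.

Lemma intgB f g : intg P f -> intg P g -> intg P (fun w => f w - g w).
Proof.
move=> i1 i2; apply: (intg_ext (intgD i1 (intgZ (-1) i2))) => w.
by rewrite mulN1r.
Qed.

Lemma gen_eq G (GM : forall A, G A -> measurable A) f u v p q :
  sub_meas G f -> intg P u -> intg P v -> intg P p -> intg P q ->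
  (forall w, p w = f w * u w) -> (forall w, q w = f w * v w) ->
  (forall A, G A -> \int[P]_(w in A) (u w)%:E = \int[P]_(w in A) (v w)%:E)%E ->
  J p = J q.
Proof.
move=> sf iu iv ip iq pE qE e.
rewrite (Jext _ _ pE) (Jext _ _ qE) /J (gen G GM f u v) //.
- by apply: (intg_ext ip).
- by apply: (intg_ext iq).
Qed.

End J.
Arguments Jint {R d Omega P f}.
Arguments JD {R d Omega P f g}.
Arguments JB {R d Omega P f g}.
Arguments intgB {R d Omega P f g}.
Arguments gen_eq {R d Omega P} G GM f u v {p q}.
Arguments Jext {R d Omega P f g}.

Definition gens {d : measure_display} {Omega : measurableType d}
  {dX d1 d2 d3 d4 : measure_display} {TX : measurableType dX}
  {T1 : measurableType d1} {T2 : measurableType d2}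
  {T3 : measurableType d3} {T4 : measurableType d4}
  (X : Omega -> TX) (M1 : Omega -> T1) (M2 : Omega -> T2)
  (M3 : Omega -> T3) (M4 : Omega -> T4) (j : nat) : set (set Omega) :=
  preim_sys X
      `|` (if (1 <= j)%N then preim_sys M1 else set0)
      `|` (if (2 <= j)%N then preim_sys M2 else set0)
      `|` (if (3 <= j)%N then preim_sys M3 else set0)
      `|` (if (4 <= j)%N then preim_sys M4 else set0).



Theorem mainTheorem7
  (R : realType) (d : measure_display) (Omega : measurableType d)
  (P : probability Omega R)
  (dX d1 d2 d3 d4 : measure_display) (TX : measurableType dX)
  (T1 : measurableType d1) (T2 : measurableType d2)
  (T3 : measurableType d3) (T4 : measurableType d4)
  (X : Omega -> TX) (Rv : Omega -> bool)
  (M1 : Omega -> T1) (M2 : Omega -> T2) (M3 : Omega -> T3) (M4 : Omega -> T4)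
  (Y : Omega -> R)
  (* true nuisances (versions of the conditional expectations) *)
  (g : nat -> Omega -> R) (mu B C : Omega -> R) (Q : nat -> Omega -> R)
  (* the fixed functions Qhat *)
  (gh : nat -> Omega -> R) (muh Bh Ch : Omega -> R)
  (k : nat) :
  let sig := sigmaMX X M1 M2 M3 M4 in
  (1 <= k <= 4)%N ->
  measurable_fun setT X -> measurable_fun setT Rv ->
  measurable_fun setT M1 -> measurable_fun setT M2 ->
  measurable_fun setT M3 -> measurable_fun setT M4 ->
  measurable_fun setT Y -> intg P (fun w => Y w ^+ 2) ->
  (* g_j = P(R = 1 | Mbar_j, X), pi = g_0, and positivity *)
  (forall j, (j <= 4)%N -> is_condexp P (sig j) (fun w => ind (Rv w)) (g j)) ->
  (forall j, (j <= 4)%N -> {ae P, forall w, 0 < g j w < 1}) ->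
  (* mu = mu_k(Mbar_k, 0, X) *)
  is_condexp_arm P Rv false (sig k) Y mu ->
  (* B = B_k(Mbar_{k-1}, 1, X) *)
  is_condexp_arm P Rv true (sig k.-1) mu B ->
  (* C = C_{B_k}(X) *)
  ((2 <= k)%N -> is_condexp_arm P Rv false (sig 0) B C) ->
  (k = 1%N -> C = B) ->
  (* target: gamma = E[Q 0], where Q 4 = E[Y | Mbar_4, R=0, X] and
     Q (j-1) = E[Q j | Mbar_{j-1}, R = r_j, X], r_j = 1 iff j = k *)
  is_condexp_arm P Rv false (sig 4) Y (Q 4) ->
  (forall j, (1 <= j <= 4)%N ->
     is_condexp_arm P Rv (j == k) (sig j.-1) (Q j) (Q j.-1)) ->
  (* the fixed functions: functions of their arguments, pihat, ghat in (0,1) *)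
  (forall j, j \in [:: 0%N; k.-1; k] -> sub_meas (sig j) (gh j)) ->
  (forall j w, j \in [:: 0%N; k.-1; k] -> 0 < gh j w < 1) ->
  sub_meas (sig k) muh -> sub_meas (sig k.-1) Bh -> sub_meas (sig 0) Ch ->
  (k = 1%N -> Ch = Bh) ->
  integrability_conditions P Rv Y (g 0) (gh 0) (g k.-1) (gh k.-1) (g k) (gh k)
    mu muh B Bh C Ch ->
  (\int[P]_w (hQ Rv Y (gh 0) (gh k.-1) (gh k) muh Bh Ch w)%:E
     - \int[P]_w (Q 0 w)%:E
   = \int[P]_w (remainder (g 0) (gh 0) (g k.-1) (gh k.-1) (g k) (gh k)
                   mu muh B Bh C Ch w)%:E)%E
  /\
  (k = 1%N ->
   (\int[P]_w (hQ Rv Y (gh 0) (gh k.-1) (gh k) muh Bh Ch w)%:E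
     - \int[P]_w (Q 0 w)%:E
   = \int[P]_w (remainder1 (g 0) (gh 0) (g 1) (gh 1) mu muh B Bh w)%:E)%E).
Proof.
move=> sig hk mX mRv m1 m2 m3 m4 mY iY2 Hg Hgpos Hmu HB HC HCk HQ4 HQ Hgh Hgh01
  shmu shB shC HChk HI.
have GM j : forall A, sig j A -> measurable A := sig_meas X M1 M2 M3 M4 j mX m1 m2 m3 m4.
have mono i j : (i <= j)%N -> forall A, sig i A -> sig j A := sig_mono X M1 M2 M3 M4 i j.
have /andP[k1 k4] := hk.
pose a w := 1 / (1 - gh 0%N w).
pose b w := gh k w / (1 - gh k w).
pose c w := (1 - gh k.-1 w) / gh k.-1 w.
pose r0 (w : Omega) : R := 1 - ind (Rv w).
pose r1 (w : Omega) : R := ind (Rv w).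
rewrite /integrability_conditions in HI.
pose t1 w := r0 w * a w * b w * c w * Y w.
pose t2 w := r0 w * a w * b w * c w * mu w.
pose t3 w := r0 w * a w * b w * c w * muh w.
pose t4 w := (1 - g k w) * a w * b w * c w * mu w.
pose t5 w := (1 - g k w) * a w * b w * c w * muh w.
pose t6 w := r1 w * a w * c w * mu w.
pose t7 w := r1 w * a w * c w * muh w.
pose t8 w := r1 w * a w * c w * B w.
pose t9 w := r1 w * a w * c w * Bh w.
pose t10 w := g k w * a w * c w * mu w.
pose t11 w := g k w * a w * c w * muh w.
pose t12 w := g k.-1 w * a w * c w * B w.
pose t13 w := g k.-1 w * a w * c w * Bh w.
pose t14 w := r0 w * a w * B w.
pose t15 w := r0 w * a w * Bh w.
pose t16 w := r0 w * a w * C w.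
pose t17 w := r0 w * a w * Ch w.
pose t18 w := (1 - g k.-1 w) * a w * B w.
pose t19 w := (1 - g k.-1 w) * a w * Bh w.
pose t20 w := (1 - g 0%N w) * a w * C w.
pose t21 w := (1 - g 0%N w) * a w * Ch w.
pose t22 w := C w.
pose t23 w := Ch w.
have i1 : intg P t1 by exact: List.Forall_inv HI.
have {HI} HI := List.Forall_inv_tail HI.
have i2 : intg P t2 by exact: List.Forall_inv HI.
have {HI} HI := List.Forall_inv_tail HI.
have i3 : intg P t3 by exact: List.Forall_inv HI.
have {HI} HI := List.Forall_inv_tail HI.
have i4 : intg P t4 by exact: List.Forall_inv HI.
have {HI} HI := List.Forall_inv_tail HI.
have i5 : intg P t5 by exact: List.Forall_inv HI.
have {HI} HI := List.Forall_inv_tail HI.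
have i6 : intg P t6 by exact: List.Forall_inv HI.
have {HI} HI := List.Forall_inv_tail HI.
have i7 : intg P t7 by exact: List.Forall_inv HI.
have {HI} HI := List.Forall_inv_tail HI.
have i8 : intg P t8 by exact: List.Forall_inv HI.
have {HI} HI := List.Forall_inv_tail HI.
have i9 : intg P t9 by exact: List.Forall_inv HI.
have {HI} HI := List.Forall_inv_tail HI.
have i10 : intg P t10 by exact: List.Forall_inv HI.
have {HI} HI := List.Forall_inv_tail HI.
have i11 : intg P t11 by exact: List.Forall_inv HI.
have {HI} HI := List.Forall_inv_tail HI.
have i12 : intg P t12 by exact: List.Forall_inv HI.
have {HI} HI := List.Forall_inv_tail HI.
have i13 : intg P t13 by exact: List.Forall_inv HI.
have {HI} HI := List.Forall_inv_tail HI.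
have i14 : intg P t14 by exact: List.Forall_inv HI.
have {HI} HI := List.Forall_inv_tail HI.
have i15 : intg P t15 by exact: List.Forall_inv HI.
have {HI} HI := List.Forall_inv_tail HI.
have i16 : intg P t16 by exact: List.Forall_inv HI.
have {HI} HI := List.Forall_inv_tail HI.
have i17 : intg P t17 by exact: List.Forall_inv HI.
have {HI} HI := List.Forall_inv_tail HI.
have i18 : intg P t18 by exact: List.Forall_inv HI.
have {HI} HI := List.Forall_inv_tail HI.
have i19 : intg P t19 by exact: List.Forall_inv HI.
have {HI} HI := List.Forall_inv_tail HI.
have i20 : intg P t20 by exact: List.Forall_inv HI.
have {HI} HI := List.Forall_inv_tail HI.
have i21 : intg P t21 by exact: List.Forall_inv HI.
have {HI} HI := List.Forall_inv_tail HI.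
have i22 : intg P t22 by exact: List.Forall_inv HI.
have {HI} HI := List.Forall_inv_tail HI.
have i23 : intg P t23 by exact: List.Forall_inv HI.
have sh0 : sub_meas (sig 0%N) (gh 0%N) by apply: Hgh; rewrite inE eqxx.
have shk1 : sub_meas (sig k.-1) (gh k.-1) by apply: Hgh; rewrite !inE eqxx ?orbT.
have shk : sub_meas (sig k) (gh k) by apply: Hgh; rewrite !inE eqxx ?orbT.
have up (i j : nat) (f : Omega -> R) : (i <= j)%N -> sub_meas (sig i) f -> sub_meas (sig j) f.
  by move=> ij; apply: sub_meas_mono; exact: mono.
have sa j : sub_meas (sig j) a.
  apply: (up 0%N) => //; apply: sub_measM; first exact: sub_meas_cst.
  by apply: sub_measV; apply: sub_measB => //; exact: sub_meas_cst.
have sb : sub_meas (sig k) b.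
  apply: sub_measM => //; apply: sub_measV; apply: sub_measB => //.
  exact: sub_meas_cst.
have sc : sub_meas (sig k.-1) c.
  apply: sub_measM; last exact: sub_measV.
  by apply: sub_measB => //; exact: sub_meas_cst.
have sc' : sub_meas (sig k) c := up _ _ _ (leq_pred k) sc.
have smu : sub_meas (sig k) mu by case: Hmu.
have sB : sub_meas (sig k.-1) B by case: HB.
have sC : sub_meas (sig 0%N) C.
  have [k1e|k2] := eqVneq k 1%N.
    by rewrite HCk //; move: HB; rewrite k1e; case.
  by case: (HC _) => //; rewrite ltn_neqAle eq_sym k2 k1.
have k14 : (k.-1 <= 4)%N := leq_trans (leq_pred k) k4.
have ca_mu := condexp_arm_gen mRv (GM k) Hmu.
have ca_B := condexp_arm_gen mRv (GM k.-1) HB.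
have cg0 r := condexp_gen r mRv (GM 0%N) (Hg 0%N (leq0n 4)).
have cgk1 r := condexp_gen r mRv (GM k.-1) (Hg k.-1 k14).
have cgk r := condexp_gen r mRv (GM k) (Hg k k4).
have F1 : J P t1 = J P t2.
  case: ca_mu => iu iv e.
  have := gen_eq (sig k) (GM k) (fun w => a w * b w * c w) _ _ _ iu iv i1 i2 _ _ e.
  apply.
  - rewrite /sig /sigmaMX; apply: sub_measM; [apply: sub_measM|]; [exact: sa|exact: sb|exact: sc'].
  - by move=> w; rewrite /t1 /r0 /rind /=; ring.
  - by move=> w; rewrite /t2 /r0 /rind /=; ring.
have F2a : J P t2 = J P t4.
  case: (cgk false) => iu iv e.
  have := gen_eq (sig k) (GM k) (fun w => a w * b w * c w * mu w) _ _ _ iu iv i2 i4 _ _ e; apply.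
  - rewrite /sig /sigmaMX; apply: sub_measM; [apply: sub_measM; [apply: sub_measM|]|]; [exact: sa|exact: sb|exact: sc'|exact: smu].
  - by move=> w; rewrite /t2 /r0 /r1 /rind /gr /=; ring.
  - by move=> w; rewrite /t4 /r0 /r1 /rind /gr /=; ring.
have F2b : J P t3 = J P t5.
  case: (cgk false) => iu iv e.
  have := gen_eq (sig k) (GM k) (fun w => a w * b w * c w * muh w) _ _ _ iu iv i3 i5 _ _ e; apply.
  - rewrite /sig /sigmaMX; apply: sub_measM; [apply: sub_measM; [apply: sub_measM|]|]; [exact: sa|exact: sb|exact: sc'|exact: shmu].
  - by move=> w; rewrite /t3 /r0 /r1 /rind /gr /=; ring.
  - by move=> w; rewrite /t5 /r0 /r1 /rind /gr /=; ring.
have F3 : J P t6 = J P t8.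
  case: (ca_B) => iu iv e.
  have := gen_eq (sig k.-1) (GM k.-1) (fun w => a w * c w) _ _ _ iu iv i6 i8 _ _ e; apply.
  - rewrite /sig /sigmaMX; apply: sub_measM; [exact: sa|exact: sc].
  - by move=> w; rewrite /t6 /r0 /r1 /rind /gr /=; ring.
  - by move=> w; rewrite /t8 /r0 /r1 /rind /gr /=; ring.
have F4a : J P t6 = J P t10.
  case: (cgk true) => iu iv e.
  have := gen_eq (sig k) (GM k) (fun w => a w * c w * mu w) _ _ _ iu iv i6 i10 _ _ e; apply.
  - rewrite /sig /sigmaMX; apply: sub_measM; [apply: sub_measM|]; [exact: sa|exact: sc'|exact: smu].
  - by move=> w; rewrite /t6 /r0 /r1 /rind /gr /=; ring.
  - by move=> w; rewrite /t10 /r0 /r1 /rind /gr /=; ring.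
have F4b : J P t7 = J P t11.
  case: (cgk true) => iu iv e.
  have := gen_eq (sig k) (GM k) (fun w => a w * c w * muh w) _ _ _ iu iv i7 i11 _ _ e; apply.
  - rewrite /sig /sigmaMX; apply: sub_measM; [apply: sub_measM|]; [exact: sa|exact: sc'|exact: shmu].
  - by move=> w; rewrite /t7 /r0 /r1 /rind /gr /=; ring.
  - by move=> w; rewrite /t11 /r0 /r1 /rind /gr /=; ring.
have F5a : J P t8 = J P t12.
  case: (cgk1 true) => iu iv e.
  have := gen_eq (sig k.-1) (GM k.-1) (fun w => a w * c w * B w) _ _ _ iu iv i8 i12 _ _ e; apply.
  - rewrite /sig /sigmaMX; apply: sub_measM; [apply: sub_measM|]; [exact: sa|exact: sc|exact: sB].
  - by move=> w; rewrite /t8 /r0 /r1 /rind /gr /=; ring.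
  - by move=> w; rewrite /t12 /r0 /r1 /rind /gr /=; ring.
have F5b : J P t9 = J P t13.
  case: (cgk1 true) => iu iv e.
  have := gen_eq (sig k.-1) (GM k.-1) (fun w => a w * c w * Bh w) _ _ _ iu iv i9 i13 _ _ e; apply.
  - rewrite /sig /sigmaMX; apply: sub_measM; [apply: sub_measM|]; [exact: sa|exact: sc|exact: shB].
  - by move=> w; rewrite /t9 /r0 /r1 /rind /gr /=; ring.
  - by move=> w; rewrite /t13 /r0 /r1 /rind /gr /=; ring.
have F6a : J P t14 = J P t18.
  case: (cgk1 false) => iu iv e.
  have := gen_eq (sig k.-1) (GM k.-1) (fun w => a w * B w) _ _ _ iu iv i14 i18 _ _ e; apply.
  - rewrite /sig /sigmaMX; apply: sub_measM; [exact: sa|exact: sB].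
  - by move=> w; rewrite /t14 /r0 /r1 /rind /gr /=; ring.
  - by move=> w; rewrite /t18 /r0 /r1 /rind /gr /=; ring.
have F6b : J P t15 = J P t19.
  case: (cgk1 false) => iu iv e.
  have := gen_eq (sig k.-1) (GM k.-1) (fun w => a w * Bh w) _ _ _ iu iv i15 i19 _ _ e; apply.
  - rewrite /sig /sigmaMX; apply: sub_measM; [exact: sa|exact: shB].
  - by move=> w; rewrite /t15 /r0 /r1 /rind /gr /=; ring.
  - by move=> w; rewrite /t19 /r0 /r1 /rind /gr /=; ring.
have F8a : J P t16 = J P t20.
  case: (cg0 false) => iu iv e.
  have := gen_eq (sig 0%N) (GM 0%N) (fun w => a w * C w) _ _ _ iu iv i16 i20 _ _ e; apply.
  - rewrite /sig /sigmaMX. apply: (sub_measM _ a C); [exact: (sa 0%N)|exact: sC].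
  - by move=> w; rewrite /t16 /r0 /r1 /rind /gr /=; ring.
  - by move=> w; rewrite /t20 /r0 /r1 /rind /gr /=; ring.
have F8b : J P t17 = J P t21.
  case: (cg0 false) => iu iv e.
  have := gen_eq (sig 0%N) (GM 0%N) (fun w => a w * Ch w) _ _ _ iu iv i17 i21 _ _ e; apply.
  - rewrite /sig /sigmaMX; apply: sub_measM; [exact: (sa 0%N)|exact: shC].
  - by move=> w; rewrite /t17 /r0 /r1 /rind /gr /=; ring.
  - by move=> w; rewrite /t21 /r0 /r1 /rind /gr /=; ring.
have F7 : J P t14 = J P t16.
  have [k1e|k2] := eqVneq k 1%N.
    by apply: Jext => w; rewrite /t14 /t16 HCk.
  have k2' : (1 < k)%N by rewrite ltn_neqAle eq_sym k2 k1.
  case: (condexp_arm_gen mRv (GM 0%N) (HC k2')) => iu iv e.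
  have := gen_eq (sig 0%N) (GM 0%N) a _ _ _ iu iv i14 i16 _ _ e; apply.
  - exact: (sa 0%N).
  - by move=> w; rewrite /t14 /r0 /rind /=; ring.
  - by move=> w; rewrite /t16 /r0 /rind /=; ring.
have arm0m : measurable [set w | Rv w = false] := marm false mRv.
have arm1m : measurable [set w | Rv w = true] := marm true mRv.
have U : forall n, (n <= 4 - k)%N ->
  [/\ sub_meas (sig (4 - n)%N) (Q (4 - n)%N),
      P.-integrable [set w | Rv w = false] (EFin \o Q (4 - n)%N) &
      forall A, sig (4 - n)%N A ->
        (\int[P]_(w in A `&` [set w | Rv w = false]) (Q (4 - n)%N w)%:E =
         \int[P]_(w in A `&` [set w | Rv w = false]) (Y w)%:E)%E].
  elim => [_|n IH Hn].
    by rewrite subn0; case: HQ4 => s _ i e; split => // A GA; rewrite e.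
  have [s0 i0 e0] := IH (ltnW Hn).
  have hj : (1 <= 4 - n <= 4)%N by apply/andP; split; lia.
  have jkF : (4 - n == k)%N = false by apply/eqP; lia.
  have := HQ (4 - n)%N hj; rewrite jkF.
  have -> : (4 - n).-1 = (4 - n.+1)%N by lia.
  case => s1 _ i2' e1; split => // A GA.
  rewrite -e1 //; apply: e0; apply: (mono (4 - n.+1)%N) => //; lia.
have [sQk iQk eQk] : [/\ sub_meas (sig k) (Q k),
      P.-integrable [set w | Rv w = false] (EFin \o Q k) &
      forall A, sig k A ->
        (\int[P]_(w in A `&` [set w | Rv w = false]) (Q k w)%:E =
         \int[P]_(w in A `&` [set w | Rv w = false]) (Y w)%:E)%E].
  by have := U (4 - k)%N (leqnn _); rewrite subKn.
have aeQk : {ae P, forall w, Q k w = mu w}.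
  case: Hmu => smu' _ imu emu.
  apply: (uniq_arm P (gens X M1 M2 M3 M4 k) (GM k) Rv false (g k) (Q k) mu mRv
    (Hg k k4) (Hgpos k k4) sQk smu' iQk imu).
  by move=> A GA; rewrite eQk // emu.
have aeQk1 : {ae P, forall w, Q k.-1 w = B w}.
  have := HQ k hk; rewrite eqxx; case => sQ1 _ iQ1 eQ.
  case: HB => sB' _ iB eB.
  apply: (uniq_arm P (gens X M1 M2 M3 M4 k.-1) (GM k.-1) Rv true (g k.-1) (Q k.-1) B mRv
    (Hg _ k14) (Hgpos _ k14) sQ1 sB' iQ1 iB).
  move=> A GA; rewrite -eQ // -eB //.
  have mA : measurable A := GM _ _ GA.
  apply: ae_eq_integral.
  - exact: measurableI.
  - apply/measurable_EFinP/(measurable_funS measurableT) => //.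
    exact: (sub_meas_meas _ _ (GM k)).
  - apply/measurable_EFinP/(measurable_funS measurableT) => //.
    exact: (sub_meas_meas _ _ (GM k)).
  - by apply: filterS aeQk => w h _; rewrite /= h.
have sQ0 : sub_meas (sig 0%N) (Q 0%N).
  have h1 : (1 <= 1 <= 4)%N by [].
  by case: (HQ 1%N h1).
have sQk1 : sub_meas (sig k.-1) (Q k.-1) by have := HQ k hk; case.
have aeQ0 : {ae P, forall w, Q 0%N w = C w}.
  have [k1e|k2] := eqVneq k 1%N.
    by move: aeQk1; rewrite (HCk k1e) k1e.
  have k2' : (1 < k)%N by lia.
  have L : forall n, (n <= k.-1)%N -> forall A, sig (k.-1 - n)%N A ->
     (\int[P]_(w in A `&` [set w | Rv w = false]) (Q (k.-1 - n)%N w)%:E =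
      \int[P]_(w in A `&` [set w | Rv w = false]) (B w)%:E)%E.
    elim => [_ A GA|n IH Hn A GA].
      rewrite subn0 in GA *.
      have mA : measurable A := GM _ _ GA.
      apply: ae_eq_integral.
      - exact: measurableI.
      - apply/measurable_EFinP/(measurable_funS measurableT) => //.
        exact: (sub_meas_meas _ _ (GM k.-1)).
      - apply/measurable_EFinP/(measurable_funS measurableT) => //.
        exact: (sub_meas_meas _ _ (GM k.-1)).
      - by apply: filterS aeQk1 => w h _; rewrite /= h.
    have hj : (1 <= k.-1 - n <= 4)%N by apply/andP; split; lia.
    have jkF : (k.-1 - n == k)%N = false by apply/eqP; lia.
    have := HQ (k.-1 - n)%N hj; rewrite jkF.
    have -> : (k.-1 - n).-1 = (k.-1 - n.+1)%N by lia.
    case => _ _ _ e1.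
    rewrite -e1 //; apply: IH; first lia.
    by apply: (mono (k.-1 - n.+1)%N) => //; lia.
  have L0 := L k.-1 (leqnn _); rewrite subnn in L0.
  case: (HC k2') => _ _ iC0 eC.
  have h1 : (1 <= 1 <= 4)%N by [].
  have e1k : (1 == k)%N = false by apply/eqP; lia.
  have := HQ 1%N h1; rewrite e1k; case => _ _ iQ0 _.
  apply: (uniq_arm P (gens X M1 M2 M3 M4 0) (GM 0%N) Rv false (g 0%N) (Q 0%N) C mRv
    (Hg _ (leq0n 4)) (Hgpos _ (leq0n 4)) sQ0 sC iQ0 iC0).
  by move=> A GA; rewrite L0 // eC.
have intQ0 : (\int[P]_w (Q 0%N w)%:E = \int[P]_w (C w)%:E)%E.
  apply: ae_eq_integral => //.
  - exact/measurable_EFinP/(sub_meas_meas _ _ (GM 0%N)).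
  - exact/measurable_EFinP/(sub_meas_meas _ _ (GM 0%N)).
  - by apply: filterS aeQ0 => w h _; rewrite /= h.
have nz w : [/\ 1 - gh 0%N w != 0, 1 - gh k w != 0, gh k.-1 w != 0, gh 0%N w != 0 &
    1 - gh k.-1 w != 0].
  have /andP[a0 a1] := Hgh01 0%N w (ltac:(by rewrite inE eqxx)).
  have /andP[b0 b1] := Hgh01 k w (ltac:(by rewrite !inE eqxx ?orbT)).
  have /andP[c0 c1] := Hgh01 k.-1 w (ltac:(by rewrite !inE eqxx ?orbT)).
  split; rewrite ?subr_eq0 ?(gt_eqF a0) ?(gt_eqF c0) // eq_sym ?(lt_eqF a1) ?(lt_eqF b1) ?(lt_eqF c1) //.
have hQE w : hQ Rv Y (gh 0%N) (gh k.-1) (gh k) muh Bh Ch w =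
    t1 w - t3 w + t7 w - t9 w + t15 w - t17 w + t23 w.
  by rewrite /hQ /t1 /t3 /t7 /t9 /t15 /t17 /t23 /r0 /r1 /a /b /c; ring.
have remE w : remainder (g 0%N) (gh 0%N) (g k.-1) (gh k.-1) (g k) (gh k) mu muh B Bh C Ch w =
    t11 w - t10 w - t5 w + t4 w + t19 w - t18 w - t13 w + t12 w + t23 w - t22 w
    - t21 w + t20 w.
  have [n1 n2 n3 n4 n5] := nz w.
  rewrite /remainder /t11 /t10 /t5 /t4 /t19 /t18 /t13 /t12 /t23 /t22 /t21 /t20 /a /b /c.
  by field; rewrite n1 n2 n3.
have c1 := intgB i1 i3.
have c2 := intgD c1 i7.
have c3 := intgB c2 i9.
have c4 := intgD c3 i15.
have c5 := intgB c4 i17.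
have c6 := intgD c5 i23.
have dd1 := intgB i11 i10.
have dd2 := intgB dd1 i5.
have dd3 := intgD dd2 i4.
have dd4 := intgD dd3 i19.
have dd5 := intgB dd4 i18.
have dd6 := intgB dd5 i13.
have dd7 := intgD dd6 i12.
have dd8 := intgD dd7 i23.
have dd9 := intgB dd8 i22.
have dd10 := intgB dd9 i21.
have dd11 := intgD dd10 i20.
have ihQ : intg P (fun w => hQ Rv Y (gh 0%N) (gh k.-1) (gh k) muh Bh Ch w).
  by apply: (intg_ext c6) => w; rewrite hQE.
have irem : intg P (fun w => remainder (g 0%N) (gh 0%N) (g k.-1) (gh k.-1) (g k)
   (gh k) mu muh B Bh C Ch w).
  by apply: (intg_ext dd11) => w; rewrite remE.
have JhQ : J P (fun w => hQ Rv Y (gh 0%N) (gh k.-1) (gh k) muh Bh Ch w) =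
    J P t1 - J P t3 + J P t7 - J P t9 + J P t15 - J P t17 + J P t23.
  rewrite (Jext hQE).
  by rewrite (JD c5 i23) (JB c4 i17) (JD c3 i15) (JB c2 i9) (JD c1 i7) (JB i1 i3).
have Jrem : J P (fun w => remainder (g 0%N) (gh 0%N) (g k.-1) (gh k.-1) (g k)
   (gh k) mu muh B Bh C Ch w) =
    J P t11 - J P t10 - J P t5 + J P t4 + J P t19 - J P t18 - J P t13 + J P t12
    + J P t23 - J P t22 - J P t21 + J P t20.
  rewrite (Jext remE).
  rewrite (JD dd10 i20) (JB dd9 i21) (JB dd8 i22) (JD dd7 i23) (JD dd6 i12).
  by rewrite (JB dd5 i13) (JB dd4 i18) (JD dd3 i19) (JD dd2 i4) (JB dd1 i5) (JB i11 i10).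
have main : (\int[P]_w (hQ Rv Y (gh 0%N) (gh k.-1) (gh k) muh Bh Ch w)%:E
     - \int[P]_w (Q 0%N w)%:E
   = \int[P]_w (remainder (g 0%N) (gh 0%N) (g k.-1) (gh k.-1) (g k) (gh k)
                   mu muh B Bh C Ch w)%:E)%E.
  rewrite intQ0 (Jint ihQ) (Jint irem).
  have -> : (\int[P]_w (C w)%:E)%E = (J P t22)%:E by exact: (Jint i22).
  rewrite -EFinB JhQ Jrem; congr EFin.
  lra.
split => // k1e.
rewrite main; apply: eq_integral => w _; congr EFin.
move: (nz w); rewrite k1e /= => -[n1 n2 n3 n4 n5].
rewrite /remainder /remainder1 (HCk k1e) (HChk k1e).
by field; rewrite n1 n2 n4.
Qed.
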